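(* Consider the following two-player game with parameters $N\ge 1$ (number of bins), a positive integer $b\ge 1$, and thresholds $k>k'\ge 0$. Initially there are $N$ bins, each containing at most $k'$ balls. In each round, first Player I removes a bin of largest size (number of balls) among the remaining bins, and then Player II adds balls to the remaining bins, at most $b$ balls in total in that round, distributed arbitrarily. Player II wins if at some moment some remaining bin contains $k$ balls; Player I wins if all bins are removed before this happens. If $b<\frac{k-k'}{\ln N+1}$, then Player I wins against every strategy of Player II. *)

(* Defs.v *)
From Stdlib Require Import Reals List Arith.
Import ListNotations.

(* A configuration of the game is the list of sizes of the remaining bins. *)

Definition remove_nth (i : nat) (s : list nat) : list nat :=
  firstn i s ++ skipn (S i) s.

Fixpoint add_balls (s a : list nat) : list nat :=
  match s, a with
  | x :: s', y :: a' => (x + y) :: add_balls s' a'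
  | _, _ => s
  end.

Definition game_round (b : nat) (s s' : list nat) : Prop :=
  exists i : nat, i < length s /\ nth i s 0 = list_max s /\
  exists a : list nat, length a = length (remove_nth i s) /\
    list_sum a <= b /\ s' = add_balls (remove_nth i s) a.

(* Main.v *)
Require Import Defs.
From Stdlib Require Import Reals List Arith.
From Stdlib Require Import Lra Lia.

Fixpoint ssum (m : list bool) (s : list nat) : nat :=
  match m, s with
  | c :: m', x :: s' => (if c then x else 0) + ssum m' s'
  | _, _ => 0
  end.

Fixpoint scnt (m : list bool) (s : list nat) : nat :=
  match m, s with
  | c :: m', x :: s' => (if c then 1 else 0) + scnt m' s'
  | _, _ => 0
  end.

Fixpoint ins (i : nat) (m : list bool) : list bool :=
  match i with
  | 0 => true :: m
  | S i' => hd false m :: ins i' (tl m)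
  end.

Lemma rem_S i x s : remove_nth (S i) (x :: s) = x :: remove_nth i s.
Proof. reflexivity. Qed.

Lemma L_rem i : forall s m, i < length s ->
  ssum (ins i m) s = nth i s 0 + ssum m (remove_nth i s) /\
  scnt (ins i m) s = S (scnt m (remove_nth i s)).
Proof.
  induction i as [|i IH]; intros s m H.
  - destruct s as [|x s]; simpl in *; [lia|].
    unfold remove_nth; simpl. lia.
  - destruct s as [|x s]; simpl in H; [lia|].
    rewrite rem_S. destruct (IH s (tl m) ltac:(lia)) as [A B].
    destruct m as [|c m]; simpl in *.
    + rewrite A, B. destruct (remove_nth i s); simpl; lia.
    + rewrite A, B. destruct c; lia.
Qed.

Lemma L_add : forall t a m, length a = length t ->
  ssum m (add_balls t a) <= ssum m t + list_sum a /\
  scnt m (add_balls t a) = scnt m t.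
Proof.
  induction t as [|x t IH]; intros a m H; simpl.
  - destruct m; simpl; lia.
  - destruct a as [|y a]; simpl in H; [lia|].
    destruct m as [|c m]; simpl; [lia|].
    destruct (IH a m ltac:(lia)) as [A B]. destruct c; lia.
Qed.

Lemma L_bound M : forall s m, Forall (fun x => x <= M) s ->
  ssum m s <= scnt m s * M.
Proof.
  induction s as [|x s IH]; intros m H; destruct m as [|c m]; simpl; try lia.
  inversion H; subst. specialize (IH m H3). destruct c; lia.
Qed.

Lemma L_cnt : forall s m, scnt m s <= length s.
Proof.
  induction s as [|x s IH]; intros m; destruct m as [|c m]; simpl; try lia.
  specialize (IH m); destruct c; lia.
Qed.

Lemma Forall_rem (P : nat -> Prop) i : forall s, Forall P s -> Forall P (remove_nth i s).
Proof.
  induction i as [|i IH]; intros s H.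
  - destruct s as [|x s]; [constructor|]. unfold remove_nth; simpl.
    inversion H; auto.
  - destruct s as [|x s]; [constructor|]. rewrite rem_S.
    inversion H; subst. constructor; auto.
Qed.

Open Scope R_scope.

Fixpoint H (n : nat) : R :=
  match n with
  | O => 0
  | S n' => H n' + / INR (S n')
  end.

Lemma H_mono : forall n p, (n <= p)%nat -> H n <= H p.
Proof.
  intros n p Hnp; induction Hnp; [lra|].
  change (H (S m)) with (H m + / INR (S m)). assert (0 < / INR (S m)) by (apply Rinv_0_lt_compat, lt_0_INR; lia). lra.
Qed.

Lemma ln_le_lin y : 0 < y -> ln y <= y - 1.
Proof. intros Hy. pose proof (exp_ineq1_le (ln y)). rewrite exp_ln in H0; lra. Qed.

Lemma H_ln : forall n, (1 <= n)%nat -> H n <= 1 + ln (INR n).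
Proof.
  induction n as [|n IH]; intros Hn; [lia|].
  destruct n as [|n].
  - simpl. rewrite ln_1. lra.
  - specialize (IH ltac:(lia)).
    change (H (S (S n))) with (H (S n) + / INR (S (S n))).
    set (a := INR (S n)) in *. set (c := INR (S (S n))).
    assert (ha : 0 < a) by (apply lt_0_INR; lia).
    assert (hc : c = a + 1) by (unfold a, c; rewrite (S_INR (S n)); lra).
    assert (hy : 0 < a / c) by (apply Rdiv_lt_0_compat; lra).
    pose proof (ln_le_lin _ hy) as L.
    unfold Rdiv in L. rewrite ln_mult, ln_Rinv in L by (try apply Rinv_0_lt_compat; lra).
    assert (a * / c - 1 = - / c) by (rewrite hc; field; lra).
    lra.
Qed.

Section Inv.
Variables (N b k' : nat).

Definition f (j : nat) : R :=
  INR j * INR k' + INR b * INR j * (H (N - 1) - H (pred j)).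

Definition Inv (s : list nat) : Prop :=
  forall m, (1 <= scnt m s)%nat -> INR (ssum m s) <= f (scnt m s).

Lemma Inv_init s : length s = N -> Forall (fun x => x <= k')%nat s -> Inv s.
Proof.
  intros Hl Hf m Hm. pose proof (L_bound k' s m Hf) as A.
  pose proof (L_cnt s m) as C. unfold f.
  apply le_INR in A. rewrite mult_INR in A.
  assert (H (pred (scnt m s)) <= H (N - 1)) by (apply H_mono; lia).
  assert (0 <= INR b * INR (scnt m s)) by (apply Rmult_le_pos; apply pos_INR).
  assert (0 <= INR b * INR (scnt m s) * (H (N-1) - H (pred (scnt m s)))) by
    (apply Rmult_le_pos; lra).
  lra.
Qed.

Lemma Inv_step s s' : Inv s -> game_round b s s' -> Inv s'.
Proof.
  intros I [i [Hi [Hmax [a [Ha [Hsum Hs']]]]]] m Hm. subst s'.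
  set (t := remove_nth i s) in *.
  destruct (L_add t a m Ha) as [A1 A2]. rewrite A2 in *.
  destruct (L_rem i s m Hi) as [R1 R2]. fold t in R1, R2.
  specialize (I (ins i m) ltac:(lia)). rewrite R1, R2 in I.
  assert (FM : Forall (fun x => x <= list_max s)%nat t).
  { apply Forall_rem. apply list_max_le. lia. }
  pose proof (L_bound _ t m FM) as B.
  set (j := scnt m t) in *. set (S0 := ssum m t) in *. set (M := list_max s) in *.
  rewrite Hmax in I.
  apply le_INR in B. rewrite mult_INR in B.
  rewrite plus_INR in I.
  apply le_INR in A1. rewrite plus_INR in A1.
  apply le_INR in Hsum.
  set (g := INR j * INR k' + INR b * INR j * (H (N - 1) - H j)).
  assert (hj : 0 < INR j) by (apply lt_0_INR; lia).
  assert (E1 : INR j * f (S j) = (INR j + 1) * g).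
  { unfold f, g. simpl pred. rewrite S_INR. ring. }
  assert (G : INR S0 <= g).
  { assert ((INR j + 1) * INR S0 <= (INR j + 1) * g).
    { rewrite <- E1. apply Rle_trans with (INR j * (INR M + INR S0)).
      - nra.
      - apply Rmult_le_compat_l; lra. }
    nra. }
  assert (E2 : f j = g + INR b).
  { unfold f, g. destruct j as [|j']; [simpl in hj; lra|].
    simpl pred. change (H (S j')) with (H j' + / INR (S j')).
    field. lra. }
  rewrite E2. lra.
Qed.

End Inv.

Theorem mainTheorem6 (N b k k' : nat) (hN : (1 <= N)%nat) (hb : (1 <= b)%nat)
  (hk : (k' < k)%nat)
  (hbk : (INR b < (INR k - INR k') / (ln (INR N) + 1))%R)
  (play : nat -> list nat)
  (h0 : length (play 0%nat) = N)
  (hinit : Forall (fun x => (x <= k')%nat) (play 0%nat))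
  (hstep : forall t : nat, (t < N)%nat -> game_round b (play t) (play (S t))) :
  forall t : nat, (t <= N)%nat -> Forall (fun x => (x < k)%nat) (play t).
Proof.
  assert (I : forall t, (t <= N)%nat -> Inv N b k' (play t)).
  { induction t as [|t IH]; intros Ht.
    - apply Inv_init; auto.
    - apply Inv_step with (play t); [apply IH; lia | apply hstep; lia]. }
  intros t Ht. apply Forall_forall. intros x Hx.
  destruct (In_nth _ _ 0%nat Hx) as [p [Hp Hpx]].
  destruct (L_rem p (play t) nil Hp) as [R1 R2].
  simpl in R1, R2. specialize (I t Ht (ins p nil)). rewrite <- Hpx.
  assert (Hl : (0 < ln (INR N) + 1)).
  { assert (1 <= INR N) by (apply (le_INR 1); lia).
    destruct (Req_dec (INR N) 1) as [e|e]; [rewrite e, ln_1; lra|].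
    assert (0 < ln (INR N)) by (rewrite <- ln_1; apply ln_increasing; lra). lra. }
  assert (Hh : H (N - 1) <= ln (INR N) + 1).
  { destruct (Nat.eq_dec N 1) as [e|e].
    - rewrite e. change (0 <= ln 1 + 1). rewrite ln_1. lra.
    - pose proof (H_ln (N-1) ltac:(lia)).
      assert (ln (INR (N - 1)) < ln (INR N)).
      { apply ln_increasing; [apply lt_0_INR; lia| apply lt_INR; lia]. }
      lra. }
  assert (INR b * (ln (INR N) + 1) < INR k - INR k').
  { apply Rmult_lt_compat_r with (r := ln (INR N) + 1) in hbk; auto.
    unfold Rdiv in hbk. rewrite Rmult_assoc, Rinv_l in hbk; lra. }
  apply INR_lt.
  assert (INR (ssum (ins p nil) (play t)) <= f N b k' 1).
  { rewrite <- R2. apply I. lia. }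
  rewrite R1, <- plus_n_O in H1. unfold f in H1. simpl pred in H1. change (H 0) with 0 in H1. simpl INR in H1.
  assert (0 <= INR b) by apply pos_INR.
  assert (INR b * H (N-1) <= INR b * (ln (INR N) + 1)) by (apply Rmult_le_compat_l; lra).
  lra.
Qed.
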